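(* Let $\Omega\subset\mathbb{R}^2$ be a box such that $\overline{\Omega}=\bigcup_i\overline{\Omega_i}$ for at most countably many mutually disjoint boxes $\Omega_i\subset\mathbb{R}^2$, all with endpoints on the grid for the mesh size vector $h=(h_1,h_2)$. Then for every $u:\overline{\Omega}_h\to\mathbb{R}$ and $1\le p<\infty$, $$\|u\|^p_{L^p(\Omega_h)}\le\sum_i\|u\|^p_{L^p(\Omega_{i,h})}\le4\|u\|^p_{L^p(\Omega_h)},\qquad \|u\|^2_{D(\Omega_h)}\le\sum_i\|u\|^2_{D(\Omega_{i,h})}\le2\|u\|^2_{D(\Omega_h)}.$$
   Context: For a box $B=(a_1,b_1)\times(a_2,b_2)$ with $a_j=k_jh_j$, $b_j=l_jh_j$, $k_j,l_j\in\mathbb{Z}\cup\{\pm\infty\}$, $l_j-k_j>1$: $\mathbb{R}^2_h=\{(h_1z_1,h_2z_2):z_j\in\mathbb{Z}\}$, $\overline{B}_h=\overline{B}\cap\mathbb{R}^2_h$, $\partial B_h=\partial B\cap\mathbb{R}^2_h$, $\partial_j^+B_h=\partial B_h\cap\{x_j=b_j\}$, $\mathbf{h}=h_1h_2$, $D_j^+u(x)=(u(x+h_je_j)-u(x))/h_j$. Norms: $\|u\|^p_{L^p(B_h)}=\sum_{x\in\overline{B}_h}|u(x)|^p\mathbf{h}$, $\|u\|^2_{D(B_h)}=\sum_{j=1}^2\sum_{x\in\overline{B}_h\setminus\partial_j^+B_h}|D_j^+u(x)|^2\mathbf{h}$. $\Omega_{i,h}$ denotes the discretization of $\Omega_i$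 in this sense. *)

(* Defs.v *)
From HB Require Import structures.
From mathcomp Require Import all_boot all_order all_algebra.
From mathcomp Require Import all_classical all_reals all_analysis.
Set Implicit Arguments. Unset Strict Implicit. Unset Printing Implicit Defensive.
Import Order.TTheory GRing.Theory Num.Theory.
Import numFieldNormedType.Exports.
Local Open Scope classical_set_scope.
Local Open Scope ring_scope.

(* A grid box B = (a_1,b_1) x (a_2,b_2) with a_j = k_j h_j, b_j = l_j h_j.
   Coordinates are indexed by j : 'I_2 (ord0 = first coordinate).
   lo B j = Some k_j (finite) or None (k_j = -oo);
   hi B j = Some l_j (finite) or None (l_j = +oo). *)
Record box := Box { lo : 'I_2 -> option int; hi : 'I_2 -> option int }.

Definition box_wf (B : box) : Prop :=
  forall j : 'I_2, match lo B j, hi B j return Prop with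
                   | Some k, Some l => (1 < l - k)%R
                   | _, _ => True end.

Definition coord {R : Type} (x : R * R) (j : 'I_2) : R :=
  if j == ord0 then x.1 else x.2.

Section Defs.
Variable R : realType.
Implicit Types (h : R * R) (B : box) (u : int * int -> R).

Definition lob h B j : option R := omap (fun k : int => k%:~R * coord h j) (lo B j).
Definition hib h B j : option R := omap (fun l : int => l%:~R * coord h j) (hi B j).

Definition box_set h B : set (R * R) :=
  [set x | forall j : 'I_2,
     (match lob h B j return Prop with Some a => a < coord x j | None => True end) /\
     (match hib h B j return Prop with Some b => coord x j < b | None => True end)].

Definition gp h (z : int * int) : R * R := (z.1%:~R * h.1, z.2%:~R * h.2).

Definition gridcl h B : set (int * int) :=
  [set z | closure (box_set h B) (gp h z)].

Definition bdry_plus h B (j : 'I_2) : set (int * int) :=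
  [set z | (closure (box_set h B) `\` interior (box_set h B)) (gp h z) /\
           match hib h B j return Prop with Some b => coord (gp h z) j = b | None => False end].

Definition shift (z : int * int) (j : 'I_2) : int * int :=
  if j == ord0 then (z.1 + 1, z.2) else (z.1, z.2 + 1).

Definition Dplus h u (j : 'I_2) (z : int * int) : R :=
  (u (shift z j) - u z) / coord h j.

Definition Lp_pow h (p : R) u B : \bar R :=
  \esum_(z in gridcl h B) ((`|u z| `^ p) * (h.1 * h.2))%:E.

Definition D_sq h u B : \bar R :=
  (\sum_(j < 2)
     \esum_(z in gridcl h B `\` bdry_plus h B j) ((Dplus h u j z) ^+ 2 * (h.1 * h.2))%:E)%E.

End Defs.

(* Main.v *)
From Pilot Require Import Defs.
From HB Require Import structures.
From mathcomp Require Import all_boot all_order all_algebra.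
From mathcomp Require Import all_classical all_reals all_analysis.
Import Order.TTheory GRing.Theory Num.Theory.
Import numFieldNormedType.Exports.
Local Open Scope classical_set_scope.
Local Open Scope ring_scope.
From mathcomp Require Import zify lra.
Import Pilot.Defs.
Set Implicit Arguments. Unset Strict Implicit. Unset Printing Implicit Defensive.
Section Gen.
Variable R : realType.
Local Open Scope ereal_scope.

Lemma esum_subset (T : choiceType) (A B : set T) (f : T -> \bar R) :
  (forall x, 0 <= f x) -> A `<=` B -> \esum_(x in A) f x <= \esum_(x in B) f x.
Proof.
move=> f0 AB; rewrite [X in X <= _]esum_mkcond [X in _ <= X]esum_mkcond.
apply: le_esum => x _; case: ifPn => [/set_mem/AB/mem_set ->//|_].
by case: ifP.
Qed.

Lemma esum_cst (N : nat) (c : \bar R) : 0 <= c ->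
  \esum_(k in `I_N) c = (N%:R)%:E * c.
Proof.
move=> c0; rewrite esum_fset //.
by rewrite -fsbig_ord sumr_const card_ord mule_natl.
Qed.

Lemma esum_upper (T I : choiceType) (f : T -> \bar R) (S : set T)
  (Si : I -> set T) (N : nat) (q : I -> T -> nat) :
  (forall x, 0 <= f x) -> (forall i, Si i `<=` S) ->
  (forall i z, Si i z -> (q i z < N)%N) ->
  (forall i j z, Si i z -> Si j z -> q i z = q j z -> i = j) ->
  \esum_(i in [set: I]) \esum_(z in Si i) f z <= (N%:R)%:E * \esum_(z in S) f z.
Proof.
move=> f0 SiS qN qinj.
rewrite esum_esum; last by move=> *; exact: f0.
pose e := fun k : I * T => (q k.1 k.2, k.2).
have -> : \esum_(k in [set: I] `*`` Si) f k.2 =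
          \esum_(k in e @` ([set: I] `*`` Si)) f k.2.
  rewrite (esum_image _ e (fun k => f k.2)) //.
  move=> [i z] [j z'] /set_mem [_ Hz] /set_mem [_ Hz'] [Hq Hzz] /=; subst z'.
  by rewrite (qinj i j z Hz Hz' Hq).
apply: (le_trans (y := \esum_(k in `I_N `*`` (fun=> S)) f k.2)).
  apply: (@esum_subset _ _ _ (fun k => f k.2)) => // _ [[i z] [_ /= Hz] <-]; split => /=; [exact: qN Hz | exact: SiS Hz].
rewrite -(esum_esum (I := `I_N) (J := fun=> S) (a := fun _ z => f z)); last by move=> *.
rewrite esum_cst //; exact: esum_ge0.
Qed.

Lemma esum_lower (T I : choiceType) (f : T -> \bar R) (S : set T)
  (Si : I -> set T) :
  (forall x, 0 <= f x) -> S `<=` \bigcup_i Si i ->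
  \esum_(z in S) f z <= \esum_(i in [set: I]) \esum_(z in Si i) f z.
Proof.
move=> f0 SSi.
have [->|/set0P[z0 Sz0]] := eqVneq S set0.
  by rewrite esum_set0; apply: esum_ge0 => i _; exact: esum_ge0.
have [i0 _ _] := SSi z0 Sz0.
have : forall z, exists i, S z -> Si i z.
  move=> z; have [Sz|nSz] := pselect (S z).
    by have [i _ Hi] := SSi z Sz; exists i.
  by exists i0.
move=> /choice [g Hg].
rewrite esum_esum; last by move=> *; exact: f0.
pose e := fun z : T => (g z, z).
have -> : \esum_(z in S) f z = \esum_(k in e @` S) f k.2.
  rewrite (esum_image _ e (fun k => f k.2)) //.
  by move=> z z' _ _ [_ ->].
apply: esum_subset => // _ [z Sz <-]; split => //=; exact: Hg.
Qed.
End Gen.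
Definition cb (R : realType) (h : R * R) (B : box) (x : R * R) : Prop :=
  forall j : 'I_2,
    (match lob h B j with Some a => a <= coord x j | None => True end) /\
    (match hib h B j with Some b => coord x j <= b | None => True end).

Lemma coord_ball (R : realType) (x y : R * R) (e : R) (j : 'I_2) :
  ball x e y -> `|coord x j - coord y j| < e.
Proof. by case=> H1 H2; rewrite /coord; case: ifP. Qed.

Lemma cl_sub (R : realType) (h : R * R) (B : box) (x : R * R) :
  closure (box_set h B) x -> cb h B x.
Proof.
move=> cx j; split.
- case E: (lob h B j) => [a|] //; rewrite leNgt; apply/negP => xa.
  have pos : 0 < a - coord x j by rewrite subr_gt0.
  have [y [By bxy]] := cx _ (nbhsx_ballx x _ pos).
  have := (By j).1; rewrite E => ay.
  have := coord_ball j bxy; rewrite ltr_norml => /andP[H1 H2]; clear E By; lra.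
- case E: (hib h B j) => [b|] //; rewrite leNgt; apply/negP => xb.
  have pos : 0 < coord x j - b by rewrite subr_gt0.
  have [y [By bxy]] := cx _ (nbhsx_ballx x _ pos).
  have := (By j).2; rewrite E => yb.
  have := coord_ball j bxy; rewrite ltr_norml => /andP[H1 H2]; clear E By; lra.
Qed.

Lemma cl_sup (R : realType) (h : R * R) (B : box) (x P : R * R) :
  cb h B x -> box_set h B P -> closure (box_set h B) x.
Proof.
move=> cbx BP B0 /nbhs_ballP [e /= e0 sub].
pose d := 1 + `|P.1 - x.1| + `|P.2 - x.2|.
have d0 : 0 < d by rewrite /d; have := normr_ge0 (P.1 - x.1); have := normr_ge0 (P.2 - x.2); lra.
pose t := e / (e + 2 * d).
have ed0 : 0 < e + 2 * d by lra.
have t0 : 0 < t by rewrite /t divr_gt0.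
have t1 : t < 1 by rewrite /t ltr_pdivrMr // mul1r; lra.
have td : t * d < e.
  by rewrite /t mulrAC ltr_pdivrMr //; nra.
pose y := (x.1 + t * (P.1 - x.1), x.2 + t * (P.2 - x.2)).
have cy : forall j, coord y j = coord x j + t * (coord P j - coord x j).
  by move=> j; rewrite /coord; case: ifP.
exists y; split.
- move=> j; have [Hl Hu] := cbx j; have [Pl Pu] := BP j; rewrite cy; split.
    by move: Hl Pl; case: (lob h B j) => // a Hl Pl; nra.
  by move: Hu Pu; case: (hib h B j) => // b Hu Pu; nra.
- apply: sub; split; rewrite /ball /= opprD addrA subrr add0r normrN normrM
    (gtr0_norm t0).
  + have : `|P.1 - x.1| <= d by rewrite /d; have := normr_ge0 (P.2 - x.2); lra.
    nra.
  + have : `|P.2 - x.2| <= d by rewrite /d; have := normr_ge0 (P.1 - x.1); lra.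
    nra.
Qed.

Lemma rint (R : realType) (a b : int) : (a + 1 <= b)%R -> (a%:~R + 1 <= b%:~R :> R).
Proof. by move=> H; rewrite -[1]/(1%:~R) -intrD ler_int. Qed.

Definition hs (R : realType) (s : bool) : R := if s then - 2^-1 else 2^-1.

Lemma hs_bnd (R : realType) s : - 2^-1 <= hs R s <= 2^-1.
Proof. by rewrite /hs; case: s; apply/andP; split; lra. Qed.

Definition sgn (B : box) (z : int * int) (j : 'I_2) : bool :=
  match hi B j with Some l => (l <= coord z j)%R | None => false end.

Definition o1 : 'I_2 := @Ordinal 2 1 isT.

Definition qp' (R : realType) (h : R * R) (z : int * int) (s : 'I_2 -> bool) : R * R :=
  ((z.1%:~R + hs R (s ord0)) * h.1, (z.2%:~R + hs R (s o1)) * h.2).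

Definition qp (R : realType) (h : R * R) (B : box) (z : int * int) := qp' h z (sgn B z).

Lemma coord_gp (R : realType) (h : R * R) z j :
  coord (gp h z) j = (coord z j)%:~R * coord h j.
Proof. by rewrite /coord; case: ifP. Qed.

Lemma ord2E (j : 'I_2) : j != ord0 -> j = o1.
Proof. by move=> Hj; apply/val_inj; case: j Hj => [[|[|m]] Hm]. Qed.

Lemma coord_qp (R : realType) (h : R * R) z s j :
  coord (qp' h z s) j = ((coord z j)%:~R + hs R (s j)) * coord h j.
Proof. by rewrite /coord; case: ifPn => [/eqP -> //| /ord2E ->]. Qed.

Lemma hpos (R : realType) (h : R * R) j : 0 < h.1 -> 0 < h.2 -> 0 < coord h j.
Proof. by rewrite /coord; case: ifP. Qed.

Lemma qp_in (R : realType) (h : R * R) B z : 0 < h.1 -> 0 < h.2 -> box_wf B ->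
  cb h B (gp h z) -> box_set h B (qp h B z).
Proof.
move=> h1 h2 wf cbz j; have hj := hpos j h1 h2.
have [Hl Hu] := cbz j; have wfj := wf j.
rewrite /qp coord_qp /sgn; rewrite coord_gp in Hl Hu.
move: Hl Hu wfj; rewrite /lob /hib.
case: (lo B j) => [k|]; case: (hi B j) => [l|] /= Hl Hu wfj; split => //;
  rewrite ?ltr_pM2r //; rewrite ?ler_pM2r // ?ler_int in Hl Hu;
  set Z := coord z j in Hl Hu *; rewrite /hs.
- case: ifP => HlZ.
    have : (k + 1 + 1 <= Z)%R by lia.
    move/(rint R); rewrite intrD; lra.
  move: Hl; rewrite -(ler_int R); lra.
- case: ifP => HlZ.
    move: Hu; rewrite -(ler_int R); lra.
  have : (Z + 1 <= l)%R by lia.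
  move/(rint R); lra.
- move: Hl; rewrite -(ler_int R); lra.
- case: ifP => HlZ.
    move: Hu; rewrite -(ler_int R); lra.
  have : (Z + 1 <= l)%R by lia.
  move/(rint R); lra.
Qed.

Lemma half_cb (R : realType) (h : R * R) B z s : 0 < h.1 -> 0 < h.2 ->
  cb h B (qp' h z s) ->
  cb h B (gp h z) /\ (forall c, s c = false -> sgn B z c = false).
Proof.
move=> h1 h2 cbq.
have key : forall j, (match lo B j with Some k => (k <= coord z j)%R | None => True end) /\
           (match hi B j with Some l => (coord z j <= l)%R /\
               (s j = false -> (coord z j < l)%R) | None => True end).
  move=> j; have hj := hpos j h1 h2; have [Hl Hu] := cbq j.
  have /andP[hb1 hb2] := hs_bnd R (s j).
  move: Hl Hu; rewrite /lob /hib coord_qp.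
  case: (lo B j) => [k|]; case: (hi B j) => [l|] /= Hl Hu; rewrite ?ler_pM2r // in Hl Hu;
   set Z := coord z j in Hl Hu *; split => //; try split;
   try (rewrite leNgt; apply/negP => HH);
   try (move=> sf; rewrite ltNge; apply/negP => HH).
  all: try ((have HH2 : (Z + 1 <= k)%R by lia); have := @rint R _ _ HH2; lra).
  all: try ((have HH2 : (l + 1 <= Z)%R by lia); have := @rint R _ _ HH2; lra).
  all: try (move: sf Hu; rewrite /hs => ->; move: HH; rewrite -(ler_int R); lra).
split.
- move=> j; have [K1 K2] := key j; have hj := hpos j h1 h2.
  rewrite /lob /hib coord_gp; move: K1 K2.
  case: (lo B j) => [k|]; case: (hi B j) => [l|] //= K1 K2; try case: K2 => K2 _;
    rewrite ?ler_pM2r // ?ler_int //.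
- move=> c sc; have [_ K2] := key c; rewrite /sgn; move: K2.
  case: (hi B c) => [l|] // [_ /(_ sc)]; by rewrite ltNge => /negPf.
Qed.

Lemma A_sgn (R : realType) (h : R * R) B z j : 0 < h.1 -> 0 < h.2 ->
  gridcl h B z -> ~ bdry_plus h B j z -> sgn B z j = false.
Proof.
move=> h1 h2 gz nb; have hj := hpos j h1 h2.
rewrite /sgn; case E: (hi B j) => [l|] //; apply/negP => lz; apply: nb.
split; first split => //.
- move/interior_subset => Hbox; have := (Hbox j).2; rewrite /hib E /= coord_gp.
  by rewrite ltr_pM2r // ltr_int ltNge lz.
- rewrite /hib E /= coord_gp; have := (cl_sub gz j).2; rewrite /hib E /= coord_gp.
  rewrite ler_pM2r // ler_int => zl.
  by have -> : coord z j = l by apply/eqP; rewrite eq_le zl lz.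
Qed.

Lemma sgn_A (R : realType) (h : R * R) B z j : 0 < h.1 -> 0 < h.2 ->
  sgn B z j = false -> ~ bdry_plus h B j z.
Proof.
move=> h1 h2 s [_ Hb]; have hj := hpos j h1 h2; move: Hb s; rewrite /hib /sgn.
case: (hi B j) => [l|] //=; rewrite coord_gp => /(mulIf (lt0r_neq0 hj)) /eqP.
by rewrite eqr_int => /eqP ->; rewrite lexx.
Qed.

Theorem mainTheorem16 (R : realType) (h : R * R) (I : countType)
  (Om : box) (Omi : I -> box) (p : R) (u : int * int -> R) :
  0 < h.1 -> 0 < h.2 ->
  box_wf Om -> (forall i, box_wf (Omi i)) ->
  (forall i j, i != j -> box_set h (Omi i) `&` box_set h (Omi j) = set0) ->
  closure (box_set h Om) = \bigcup_i closure (box_set h (Omi i)) ->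
  1 <= p ->
  ((Lp_pow h p u Om <= \esum_(i in [set: I]) Lp_pow h p u (Omi i))%E /\
   (\esum_(i in [set: I]) Lp_pow h p u (Omi i) <= 4%:E * Lp_pow h p u Om)%E) /\
  ((D_sq h u Om <= \esum_(i in [set: I]) D_sq h u (Omi i))%E /\
   (\esum_(i in [set: I]) D_sq h u (Omi i) <= 2%:E * D_sq h u Om)%E).
Proof.
move=> h1 h2 wfO wfi disj Hcl p1.
have hh : 0 < h.1 * h.2 by rewrite mulr_gt0.
have cl_i_O : forall i x, closure (box_set h (Omi i)) x -> closure (box_set h Om) x.
  by move=> i x Hx; rewrite Hcl; exists i.
have cl_O_i : forall x, closure (box_set h Om) x -> exists i, closure (box_set h (Omi i)) x.
  by move=> x; rewrite Hcl => -[i _ Hx]; exists i.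
have inj_box : forall i i' P, box_set h (Omi i) P -> box_set h (Omi i') P -> i = i'.
  move=> i i' P H1 H2; apply/eqP; apply/negPn/negP => /disj E.
  have : (box_set h (Omi i) `&` box_set h (Omi i')) P by [].
  by rewrite E.
have Lp0 : forall z, (0 <= ((`|u z| `^ p) * (h.1 * h.2))%:E)%E.
  by move=> z; rewrite lee_fin mulr_ge0 // ?powR_ge0 // ltW.
have D0 : forall j z, (0 <= ((Dplus h u j z) ^+ 2 * (h.1 * h.2))%:E)%E.
  by move=> j z; rewrite lee_fin mulr_ge0 // ?sqr_ge0 // ltW.
split; split.
- apply: esum_lower => // z /cl_O_i [i Hi]; by exists i.
- apply: (@esum_upper _ _ _ _ _ _ 4
    (fun i z => (sgn (Omi i) z ord0 + 2 * sgn (Omi i) z o1)%N)) => //.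
  + by move=> i z; exact: cl_i_O.
  + by move=> i z _; case: (sgn _ _ _); case: (sgn _ _ _).
  + move=> i i' z Hz Hz' Hq.
    have [e0 e1] : sgn (Omi i) z ord0 = sgn (Omi i') z ord0 /\
                   sgn (Omi i) z o1 = sgn (Omi i') z o1.
      by move: Hq; case: (sgn (Omi i) z ord0); case: (sgn (Omi i) z o1);
        case: (sgn (Omi i') z ord0); case: (sgn (Omi i') z o1).
    have eq : qp h (Omi i) z = qp h (Omi i') z by rewrite /qp /qp' e0 e1.
    apply: (inj_box _ _ (qp h (Omi i) z)); first exact: qp_in (cl_sub Hz).
    by rewrite eq; exact: qp_in (cl_sub Hz').
- rewrite /D_sq esum_sum; last by move=> *; exact: esum_ge0.
  apply: lee_sum => j _; apply: esum_lower => // z [gz nb].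
  have s := A_sgn h1 h2 gz nb.
  have PO := qp_in h1 h2 wfO (cl_sub gz).
  have [i Hi] := cl_O_i _ (subset_closure PO).
  have [cbi sgi] := half_cb h1 h2 (cl_sub Hi).
  have gzi : gridcl h (Omi i) z by exact: cl_sup cbi (qp_in h1 h2 (wfi i) cbi).
  exists i => //; split => //; apply: sgn_A h1 h2 _; exact: sgi.
- rewrite /D_sq esum_sum; last by move=> *; exact: esum_ge0.
  rewrite ge0_sume_distrr; last by move=> *; exact: esum_ge0.
  apply: lee_sum => j _.
  apply: (@esum_upper _ _ _ _ _ _ 2
    (fun i z => nat_of_bool (sgn (Omi i) z ord0 || sgn (Omi i) z o1))) => //.
  + move=> i z [gz nb]; split; first exact: cl_i_O gz.
    have s := A_sgn h1 h2 gz nb.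
    have Pi := qp_in h1 h2 (wfi i) (cl_sub gz).
    have [_ sgO] := half_cb h1 h2 (cl_sub (cl_i_O _ _ (subset_closure Pi))).
    by apply: sgn_A h1 h2 _; exact: sgO.
  + by move=> i z _; case: (_ || _).
  + move=> i i' z [gz nb] [gz' nb'] Hq.
    have s := A_sgn h1 h2 gz nb; have s' := A_sgn h1 h2 gz' nb'.
    have [e0 e1] : sgn (Omi i) z ord0 = sgn (Omi i') z ord0 /\
                   sgn (Omi i) z o1 = sgn (Omi i') z o1.
      have [Ej|/ord2E Ej] := eqVneq j ord0; rewrite Ej in s s'.
        by move: Hq s s'; case: (sgn (Omi i) z ord0); case: (sgn (Omi i) z o1);
          case: (sgn (Omi i') z ord0); case: (sgn (Omi i') z o1).
      by move: Hq s s'; case: (sgn (Omi i) z ord0); case: (sgn (Omi i) z o1);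
        case: (sgn (Omi i') z ord0); case: (sgn (Omi i') z o1).
    have eq : qp h (Omi i) z = qp h (Omi i') z by rewrite /qp /qp' e0 e1.
    apply: (inj_box _ _ (qp h (Omi i) z)); first exact: qp_in (cl_sub gz).
    by rewrite eq; exact: qp_in (cl_sub gz').
Qed.
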